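(* Let ${\mathfrak h}$ be an $n$-dimensional complex Hilbert space, $L:{\mathfrak h}\to{\mathfrak h}$ symmetric, $w\in{\mathfrak h}$, $\theta\in\mathbb R$, with $\{L^kw\}_{k=0}^{n-1}$ a basis of ${\mathfrak h}$, and let $p$ be the polynomial defined in the context. Then $$p(z)=(\theta z+1)\det(z^2-L)-z\sum_{j=1}^n\Big(\sum_{k=1}^ja_{j-k}\langle w,L^{k-1}w\rangle\Big)z^{2(n-j)},$$ where $a_0=1$ and $a_j:=(-1)^j\sum_{i_1<\dots<i_j}\lambda_{i_1}\cdots\lambda_{i_j}$ for $1\le j\le n$.
   Context: Under the basis assumption $L$ has $n$ distinct eigenvalues $\lambda_1,\dots,\lambda_n$; $V$ denotes the Vandermonde matrix $V_{ki}=\lambda_i^{k-1}$ ($1\le k,i\le n$). Define $p_1(z)=\theta z+1$, $p_k(z)=z^2p_{k-1}(z)-\langle w,L^{k-2}w\rangle z$ for $k\ge2$, and $p(z):=p_{n+1}(z)-\sum_{i,j=1}^n\lambda_i^n(V^{-1})_{ij}\,p_j(z)$. *)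

(* Defs.v *)
From HB Require Import structures.
From mathcomp Require Import all_boot all_order all_algebra.
Set Implicit Arguments. Unset Strict Implicit. Unset Printing Implicit Defensive.
Import Order.TTheory GRing.Theory Num.Theory.
Local Open Scope ring_scope.

Definition ip (C : numClosedFieldType) (n : nat) (u v : 'cV[C]_n) : C :=
  \sum_(i < n) (u i 0)^* * v i 0.

Definition selfadjoint_mx (C : numClosedFieldType) (n : nat) (L : 'M[C]_n) : Prop :=
  map_mx Num.conj L^T = L.

Definition krylov (C : numClosedFieldType) (n : nat) (L : 'M[C]_n) (w : 'cV[C]_n)
  : 'M[C]_n := \matrix_(i < n, k < n) (L ^+ k *m w) i 0.

(* pp θ L w m = p_{m+1} of the paper:
   p_1 = θ z + 1,  p_k = z^2 p_{k-1} - <w, L^{k-2} w> z. *)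
Fixpoint pp (C : numClosedFieldType) (n : nat) (theta : C) (L : 'M[C]_n)
  (w : 'cV[C]_n) (m : nat) : {poly C} :=
  match m with
  | 0 => theta *: 'X + 1
  | m'.+1 => 'X^2 * pp theta L w m' - ip w (L ^+ m' *m w) *: 'X
  end.

(* p(z) = p_{n+1}(z) - sum_{i,j} lambda_i^n (V^{-1})_{ij} p_j(z),
   V_{ki} = lambda_i^{k-1} (the mathcomp Vandermonde matrix, 0-indexed). *)
Definition pfull (C : numClosedFieldType) (n : nat) (theta : C) (L : 'M[C]_n)
  (w : 'cV[C]_n) (lambda : 'I_n -> C) : {poly C} :=
  let V := Vandermonde n (\row_(i < n) lambda i) in
  pp theta L w n -
  \sum_(i < n) \sum_(j < n) (lambda i ^+ n * invmx V i j) *: pp theta L w j.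

Definition acoef (C : numClosedFieldType) (n : nat) (lambda : 'I_n -> C) (j : nat) : C :=
  (-1) ^+ j * \sum_(I : {set 'I_n} | #|I| == j) \prod_(i in I) lambda i.

(* Main.v *)
Require Import Defs.
From HB Require Import structures.
From mathcomp Require Import all_boot all_order all_algebra.
From mathcomp Require Import zify ring.
Set Implicit Arguments. Unset Strict Implicit. Unset Printing Implicit Defensive.
Import Order.TTheory GRing.Theory Num.Theory.
Local Open Scope ring_scope.


Lemma coef_prod_XsubC_ord (R : comNzRingType) n (f : 'I_n -> R) k :
  (k <= n)%N ->
  (\prod_(i < n) ('X - (f i)%:P))`_k =
  (-1) ^+ (n - k) * \sum_(I : {set 'I_n} | #|I| == (n - k)%N) \prod_(i in I) f i.
Proof.
move=> kle.
under eq_bigr => i _ do rewrite addrC -raddfN/=.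
rewrite bigA_distr /= coef_sum.
transitivity (\sum_(I in {set 'I_n}) if #|I| == (n - k)%N then
                  \prod_(i < n | i \in I) - f i else 0).
  apply eq_bigr => I _.
  rewrite big_if/= big_const iter_mulr_1 -rmorph_prod/= coefCM coefXn.
  rewrite -[#|I| == _](eqn_add2r k) subnK//.
  rewrite -[X in (_ + _)%N == X](card_ord n) -(cardC I) eqn_add2l.
  by case: ifP; rewrite ?mulr1 ?mulr0.
by rewrite -big_mkcond mulr_sumr/=; apply: eq_bigr => I /eqP <-; rewrite prodrN.
Qed.

Lemma horner_char_poly (R : comNzRingType) n (A : 'M[R]_n) x :
  (char_poly A).[x] = \det (x%:M - A).
Proof.
rewrite /char_poly.
have -> : (\det (char_poly_mx A)).[x] = horner_eval x (\det (char_poly_mx A)) by [].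
rewrite -det_map_mx; congr (\det _).
apply/matrixP => i j; rewrite !mxE /horner_eval.
by rewrite -[LHS]/(('X *+ (i == j) - (A i j)%:P).[x]) hornerD hornerN hornerMn hornerX hornerC.
Qed.

Lemma char_poly_eig (F : fieldType) n (L : 'M[F]_n) (lambda : 'I_n -> F) :
  injective lambda -> (forall i, eigenvalue L (lambda i)) ->
  char_poly L = \prod_(i < n) ('X - (lambda i)%:P).
Proof.
move=> inj eig.
have := @all_roots_prod_XsubC _ (char_poly L) (map lambda (enum 'I_n)).
rewrite size_map size_enum_ord size_char_poly.
move/(_ erefl) => ->.
- rewrite (monicP (char_poly_monic L)) scale1r big_map big_enum //.
- by apply/allP => x /mapP [i _ ->]; rewrite -eigenvalue_root_char.
- by rewrite uniq_rootsE map_inj_uniq ?enum_uniq.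
Qed.


Lemma tri_exch (R : nmodType) N (G : nat -> nat -> R) :
  \sum_(0 <= j < N) \sum_(0 <= k < j.+1) G j k =
  \sum_(0 <= k < N) \sum_(k <= j < N) G j k.
Proof.
elim: N => [|N IH]; first by rewrite !big_geq.
rewrite big_nat_recr //= IH.
rewrite [RHS](eq_big_nat _ _ (F2 := fun k => \sum_(k <= j < N) G j k + G N k)); last first.
  by move=> k /andP[_ kN]; rewrite big_nat_recr.
rewrite big_split /=; congr (_ + _); rewrite [RHS]big_nat_recr //= [X in _ + X]big_geq // addr0.
done.
Qed.

Lemma reindex_main (R : comNzRingType) N (a c e : nat -> R) :
  \sum_(0 <= j < N.+1) a (N - j)%N * \sum_(0 <= k < j) c k * e (j - k.+1)%N =
  \sum_(1 <= j < N.+1)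
     (\sum_(1 <= k < j.+1) a (j - k)%N * c (k - 1)%N) * e (N - j)%N.
Proof.
transitivity (\sum_(0 <= k < N) \sum_(k <= j < N) a (j - k)%N * c k * e (N - j.+1)%N).
  rewrite big_nat_recl // [X in a _ * X]big_geq // mulr0 add0r.
  under eq_bigr => j _ do rewrite mulr_sumr.
  have := tri_exch N (fun j k => a (N - j.+1)%N * (c k * e (j.+1 - k.+1)%N)); rewrite /= => ->.
  apply: eq_big_nat => k /andP[_ kN].
  rewrite big_nat_rev /=; apply: eq_big_nat => j /andP[kj jN].
  have -> : (N - (k + N - j.+1).+1 = j - k)%N by lia.
  have -> : ((k + N - j.+1).+1 - k.+1 = N - j.+1)%N by lia.
  by rewrite mulrA.
rewrite big_add1 /= -tri_exch; apply: eq_big_nat => j /andP[_ jN].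
rewrite mulr_suml big_add1 /=; apply: eq_big_nat => k /andP[_ kj].
have -> : (j.+1 - k.+1 = j - k)%N by lia.
have -> : (k.+1 - 1 = k)%N by lia.
by [].
Qed.


Lemma pp_horner (C : numClosedFieldType) n theta (L : 'M[C]_n) w m z :
  (pp theta L w m).[z] = z ^+ (2 * m) * (theta * z + 1) -
     z * \sum_(0 <= k < m) ip w (L ^+ k *m w) * z ^+ (2 * (m - k.+1)).
Proof.
elim: m => [|m IH] /=.
  by rewrite big_geq // mulr0 subr0 expr0 mul1r hornerD hornerZ hornerX hornerC.
rewrite hornerD hornerN hornerZ hornerX hornerM hornerXn IH big_nat_recr //=.
rewrite subnn muln0 expr0 mulr1.
have -> : \sum_(0 <= i < m) ip w (L ^+ i *m w) * z ^+ (2 * (m.+1 - i.+1)) =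
  z ^+ 2 * \sum_(0 <= k < m) ip w (L ^+ k *m w) * z ^+ (2 * (m - k.+1)).
  rewrite mulr_sumr; apply: eq_big_nat => k /andP[_ km].
  rewrite mulrCA -exprD; congr (_ * _ ^+ _); lia.
rewrite mulnS exprD; ring.
Qed.

Lemma vander_inv (F : fieldType) n (lambda : 'I_n -> F) (j : 'I_n) :
  injective lambda ->
  \sum_(i < n) lambda i ^+ n * invmx (Vandermonde n (\row_(i < n) lambda i)) i j
  = - (\prod_(i < n) ('X - (lambda i)%:P))`_j.
Proof.
move=> inj.
set V := Vandermonde n _; set q := \prod_(i < n) _.
have Vu : V \in unitmx.
  rewrite unitmxE det_Vandermonde unitfE; apply/prodf_neq0 => i _.
  apply/prodf_neq0 => k ik; rewrite !mxE subr_eq0; apply/eqP => /inj ki.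
  by move: ik; rewrite ki ltnn.
have sq : size q = n.+1 by rewrite size_prod_XsubC [index_enum _]unlock -enumT size_enum_ord.
have q1 : q`_n = 1.
  by have := monic_prod_XsubC (index_enum 'I_n) xpredT lambda; move/monicP; rewrite lead_coefE sq.
pose r := \row_(i < n) lambda i ^+ n.
pose u := \row_(j < n) - q`_j.
have ruV : r = u *m V.
  apply/rowP => i; rewrite !mxE.
  have : q.[lambda i] = 0.
    by rewrite horner_prod (bigD1 i) //= hornerXsubC subrr mul0r.
  rewrite horner_coef sq big_ord_recr /= q1 mul1r => /eqP; rewrite addrC addr_eq0 => /eqP ->.
  rewrite -sumrN; apply: eq_bigr => k _; rewrite !mxE mulNr.
  by [].
have := congr1 (fun M => (M *m invmx V) 0 j) ruV; rewrite /= mulmxK //.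
rewrite !mxE => <-; apply: eq_bigr => i _; rewrite !mxE.
by [].
Qed.

Theorem lemma5p2 (C : numClosedFieldType) (n : nat) (L : 'M[C]_n)
  (w : 'cV[C]_n) (theta : C) (lambda : 'I_n -> C) :
  selfadjoint_mx L ->
  theta \is Num.real ->
  krylov L w \in unitmx ->
  injective lambda ->
  (forall i, eigenvalue L (lambda i)) ->
  forall z : C,
    (pfull theta L w lambda).[z] =
    (theta * z + 1) * \det ((z ^+ 2)%:M - L) -
    z * \sum_(1 <= j < n.+1)
          (\sum_(1 <= k < j.+1) acoef lambda (j - k) * ip w (L ^+ (k - 1) *m w))
          * z ^+ (2 * (n - j)).
Proof.
move=> _ _ _ inj eig z.
set q := \prod_(i < n) ('X - (lambda i)%:P).
have sq : size q = n.+1 by rewrite size_prod_XsubC [index_enum _]unlock -enumT size_enum_ord.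
have q1 : q`_n = 1.
  by have := monic_prod_XsubC (index_enum 'I_n) xpredT lambda; move/monicP; rewrite lead_coefE sq.
have Hq : forall j, (j <= n)%N -> q`_j = acoef lambda (n - j).
  by move=> j jn; rewrite /q coef_prod_XsubC_ord.
have E1 : (pfull theta L w lambda).[z] = \sum_(j < n.+1) q`_j * (pp theta L w j).[z].
  rewrite /pfull hornerD hornerN horner_sum.
  under eq_bigr => i _ do rewrite horner_sum.
  under eq_bigr => i _ do under eq_bigr => j _ do rewrite hornerZ.
  rewrite exchange_big /=.
  under eq_bigr => j _ do rewrite -mulr_suml vander_inv //.
  rewrite big_ord_recr /= q1 mul1r addrC; congr (_ + _).
  by rewrite -sumrN; apply: eq_bigr => j _; rewrite mulNr opprK.
rewrite E1 -(big_mkord xpredT (fun j => q`_j * (pp theta L w j).[z])) /=.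
under eq_bigr => j _ do rewrite pp_horner.
rewrite (eq_big_nat _ _ (F2 := fun j => (theta * z + 1) * (q`_j * (z ^+ 2) ^+ j) -
   z * (acoef lambda (n - j) * \sum_(0 <= k < j) ip w (L ^+ k *m w) * z ^+ (2 * (j - k.+1))))); last first.
  move=> j /andP[_ jn]; rewrite -Hq // -exprM; ring.
rewrite big_split /= sumrN -!mulr_sumr.
congr (_ * _ - _ * _).
  rewrite -horner_char_poly (char_poly_eig inj eig) -/q horner_coef sq big_mkord.
  by apply: eq_bigr => j _.
exact: (reindex_main n (acoef lambda) (fun k => ip w (L ^+ k *m w)) (fun m => z ^+ (2 * m))).
Qed.
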